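(* The admissible locus is independent of the choice of basis: if $\chi:\mathbb{Z}_{p^\ell}\to\mathbb{C}_p^\times$ is a continuous nontrivial character with $\mathrm{val}_q(\chi(x)-1)>0$ for all $x$, and for a $\mathbb{Z}_p$-basis $\mathbf c=(c_1,\dots,c_\ell)$ of $\mathbb{Z}_{p^\ell}$ with dual basis $c_1^*,\dots,c_\ell^*$ one puts $t_{j}^{\mathbf c}=\chi(c_j^* )-1$, then whether $$\mathrm{val}_q\big(\mathfrak{S}_{\mathbf c}(t_1^{\mathbf c},\dots,t_\ell^{\mathbf c})\big)=\ell\cdot\min_j\mathrm{val}_q(t_j^{\mathbf c})$$ holds does not depend on $\mathbf c$.
   Context: $p$ prime, $q=p^a$ with $\ell\mid a$; $\mathbb{Z}_{p^\ell}$ is the unramified extension of $\mathbb{Z}_p$ of degree $\ell$, $\mathbb{Q}_{p^\ell}$ its fraction field, $\sigma$ the arithmetic Frobenius. For a $\mathbb{Z}_p$-basis $\mathbf c$ of $\mathbb{Z}_{p^\ell}$, the dual basis $c_1^*,\dots,c_\ell^*\in\mathbb{Z}_{p^\ell}$ satisfies $\mathrm{Tr}_{\mathbb{Q}_{p^\ell}/\mathbb{Q}_p}(c_i^*c_j)=\delta_{ij}$, and $\mathfrak{S}_{\mathbf c}(\underline T)=\prod_{i=1}^\ell\big(\sum_{j=1}^\ell\sigma^i(c_j)T_j\big)$. $\mathrm{val}_q$ is the valuation on $\mathbb{C}_p$ with $\mathrm{val}_q(q)=1$. The point $(t_j^{\mathbf c})_j$ is the coordinate of $\chi$ in the weight space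 (open unit polydisk) $\mathcal{W}$ determined by $\mathbf c$; the admissible locus $\mathcal{W}^{\mathrm{adm}}$ is the set of points $\underline t\neq\underline 0$ with $\mathrm{val}_q(\mathfrak{S}_{\mathbf c}(\underline t))=\ell\min_j\mathrm{val}_q(t_j)$. *)

(* Defs.v *)
From HB Require Import structures.
From mathcomp Require Import all_boot all_order all_algebra.
From mathcomp Require Import reals constructive_ereal.
Set Implicit Arguments. Unset Strict Implicit. Unset Printing Implicit Defensive.
Import Order.TTheory GRing.Theory Num.Theory.
Local Open Scope ring_scope.

Definition is_valuation (R : realType) (K : fieldType) (v : K -> \bar R) : Prop :=
  [/\ forall x, v x = +oo%E <-> x = 0,
      forall x y, v (x * y) = (v x + v y)%E &
      forall x y, (Order.min (v x) (v y) <= v (x + y)%R)%E ].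

Definition val_complete (R : realType) (K : fieldType) (v : K -> \bar R) : Prop :=
  forall u : nat -> K,
    (forall M : R, exists N : nat, forall m n, (N <= m)%N -> (N <= n)%N ->
        (M%:E <= v (u m - u n)%R)%E) ->
    exists L : K, forall M : R, exists N : nat, forall n, (N <= n)%N ->
        (M%:E <= v (u n - L)%R)%E.

(* Z_p inside K: the closure of Z, i.e. x is congruent to an integer mod p^n for all n. *)
Definition is_Zp (R : realType) (K : fieldType) (v : K -> \bar R) (p : nat) (x : K) : Prop :=
  forall n : nat, exists m : int, (v ((p%:R : K) ^+ n)%R <= v (x - m%:~R)%R)%E.

(* Z_{p^l} inside K: Z_p[zeta] = { sum_{k<l} a_k zeta^k : a_k in Z_p },
   zeta a primitive (p^l - 1)-th root of unity. *)
Definition is_Zpl (R : realType) (K : fieldType) (v : K -> \bar R) (p l : nat) (zeta : K)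
  (x : K) : Prop :=
  exists a : 'I_l -> K, (forall k, is_Zp v p (a k)) /\ x = \sum_(k < l) a k * zeta ^+ k.

(* The element sigma^i (sum_k a_k zeta^k) = sum_k a_k zeta^(k p^i), where sigma is the
   arithmetic Frobenius (zeta |-> zeta^p). Elements of Z_{p^l} are given by their
   coefficient vectors a : 'I_l -> K (entries in Z_p). *)
Definition frob_emb (K : fieldType) (p l : nat) (zeta : K) (i : nat) (a : 'I_l -> K) : K :=
  \sum_(k < l) a k * zeta ^+ (k * p ^ i).

Definition is_Zp_basis (R : realType) (K : fieldType) (v : K -> \bar R) (p l : nat) (zeta : K)
  (c : 'I_l -> 'I_l -> K) : Prop :=
  (forall j k, is_Zp v p (c j k)) /\
  forall x, is_Zpl v p l zeta x ->
    exists! b : 'I_l -> K, (forall j, is_Zp v p (b j)) /\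
      x = \sum_(j < l) b j * frob_emb p zeta 0 (c j).

(* cs is the dual basis of c: Tr(cs_i c_j) = delta_ij, Tr = sum_{i<l} sigma^i. *)
Definition is_dual_basis (R : realType) (K : fieldType) (v : K -> \bar R) (p l : nat) (zeta : K)
  (c cs : 'I_l -> 'I_l -> K) : Prop :=
  (forall j k, is_Zp v p (cs j k)) /\
  forall a b : 'I_l,
    \sum_(i < l) frob_emb p zeta i (cs a) * frob_emb p zeta i (c b) = (a == b)%:R.

Definition good_character (R : realType) (K : fieldType) (v : K -> \bar R) (p l : nat) (zeta : K)
  (chi : K -> K) : Prop :=
  [/\ forall x y, is_Zpl v p l zeta x -> is_Zpl v p l zeta y -> chi (x + y) = chi x * chi y,
      forall x, is_Zpl v p l zeta x -> chi x != 0,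
      forall x, is_Zpl v p l zeta x -> forall M : R, exists N : R, forall y,
          is_Zpl v p l zeta y -> (N%:E <= v (y - x)%R)%E -> (M%:E <= v (chi y - chi x)%R)%E,
      (exists2 x, is_Zpl v p l zeta x & chi x != 1) &
      forall x, is_Zpl v p l zeta x -> (0 < v (chi x - 1)%R)%E ].

Definition t_coord (K : fieldType) (p l : nat) (zeta : K) (chi : K -> K)
  (cs : 'I_l -> 'I_l -> K) (j : 'I_l) : K :=
  chi (frob_emb p zeta 0 (cs j)) - 1.

Definition frakS (K : fieldType) (p l : nat) (zeta : K) (c : 'I_l -> 'I_l -> K)
  (T : 'I_l -> K) : K :=
  \prod_(i < l) \sum_(j < l) frob_emb p zeta i.+1 (c j) * T j.

Definition adm_eq (R : realType) (K : fieldType) (v : K -> \bar R) (p l : nat) (zeta : K)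
  (c : 'I_l -> 'I_l -> K) (t : 'I_l -> K) : Prop :=
  v (frakS p zeta c t) = ((l%:R : R)%:E * \big[Order.min/+oo%E]_(j < l) v (t j))%E.

(* Main.v *)
Require Import Defs.
From HB Require Import structures.
From mathcomp Require Import all_boot all_order all_algebra.
From mathcomp Require Import reals constructive_ereal.
From mathcomp Require Import ring lra.
Import Order.TTheory GRing.Theory Num.Theory.
Local Open Scope ring_scope.
Set Implicit Arguments. Unset Strict Implicit. Unset Printing Implicit Defensive.

Section Val.
Variables (R : realType) (K : fieldType) (v : K -> \bar R).
Hypothesis Hv : is_valuation v.

Lemma v0 : v 0 = +oo%E.
Proof. by case: Hv => H _ _; apply: (H 0).2. Qed.
Lemma vM x y : v (x * y) = (v x + v y)%E.
Proof. by case: Hv. Qed.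
Lemma vD x y : (Order.min (v x) (v y) <= v (x + y))%E.
Proof. by case: Hv. Qed.
Lemma v_inf x : v x = +oo%E -> x = 0.
Proof. by case: Hv => H _ _; apply: (H x).1. Qed.

Lemma v1 : v 1 = 0%E.
Proof.
have h := vM 1 1; rewrite mulr1 in h.
case E: (v 1) h => [r| |] h.
- have : r = r + r by move: h; rewrite -EFinD => -[].
  by move=> e; congr (_%:E); lra.
- by move: (v_inf E) => /eqP; rewrite oner_eq0.
- by have := vM 0 1; rewrite mulr1 E v0.
Qed.

Lemma vN1 : v (-1) = 0%E.
Proof.
have h := vM (-1) (-1); rewrite mulrNN mulr1 v1 in h.
case E: (v (-1)) h => [r| |] h.
- have : 0 = r + r by move: h; rewrite -EFinD => -[].
  by move=> e; congr (_%:E); lra.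
- by move: (v_inf E) => /eqP; rewrite oppr_eq0 oner_eq0.
- done.
Qed.

Lemma vN x : v (- x) = v x.
Proof. by rewrite -mulN1r vM vN1 add0e. Qed.

Lemma vfin x : x != 0 -> exists s, v x = s%:E.
Proof.
move=> x0; case E: (v x) => [s| |]; first by exists s.
- by move: (v_inf E) => /eqP; rewrite (negbTE x0).
- by have := vM x x^-1; rewrite mulfV // v1 E.
Qed.

Definition ge (x : K) (s : R) := (s%:E <= v x)%E.
Definition gt (x : K) (s : R) := (s%:E < v x)%E.

Lemma ge_add x y s : ge x s -> ge y s -> ge (x + y) s.
Proof. by move=> hx hy; apply: le_trans (vD x y); rewrite le_min; apply/andP. Qed.
Lemma ge_opp x s : ge x s -> ge (- x) s.
Proof. by rewrite /ge vN. Qed.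
Lemma ge_sub x y s : ge x s -> ge y s -> ge (x - y) s.
Proof. by move=> hx hy; apply: ge_add => //; apply: ge_opp. Qed.
Lemma ge_mul x y s1 s2 : ge x s1 -> ge y s2 -> ge (x * y) (s1 + s2).
Proof. by move=> hx hy; rewrite /ge vM EFinD; apply: leeD. Qed.
Lemma ge_0 s : ge 0 s.
Proof. by rewrite /ge v0 leey. Qed.
Lemma ge_1 : ge 1 0.
Proof. by rewrite /ge v1. Qed.
Lemma ge_le x s s' : (s' <= s)%R -> ge x s -> ge x s'.
Proof. by move=> h; apply: le_trans; rewrite lee_fin. Qed.
Lemma ge_mul0l x y s : ge x 0 -> ge y s -> ge (x * y) s.
Proof. by move=> hx hy; rewrite -[s]add0r; apply: ge_mul. Qed.
Lemma ge_mul0r x y s : ge x s -> ge y 0 -> ge (x * y) s.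
Proof. by move=> hx hy; rewrite -[s]addr0; apply: ge_mul. Qed.

Lemma ge_sum (I : Type) (r : seq I) (P : pred I) (F : I -> K) s :
  (forall i, P i -> ge (F i) s) -> ge (\sum_(i <- r | P i) F i) s.
Proof. by move=> h; apply: (big_ind (fun x => ge x s)) => //; [apply: ge_0 | move=> *; exact: ge_add]. Qed.

Lemma ge_prod n (F : 'I_n -> K) s :
  (forall i, ge (F i) s) -> ge (\prod_(i < n) F i) (n%:R * s).
Proof.
elim: n F => [|n IH] F h; first by rewrite big_ord0 mul0r; apply: ge_1.
rewrite big_ord_recr /= -natr1 mulrDl mul1r; apply: ge_mul => //.
by apply: IH.
Qed.

Lemma ge_pow x n : ge x 0 -> ge (x ^+ n) 0.
Proof.
move=> h; elim: n => [|n IH]; first by apply: ge_1.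
by rewrite exprS; apply: ge_mul0l.
Qed.

Lemma ge_nat n : ge n%:R 0.
Proof.
elim: n => [|n IH]; first by apply: ge_0.
by rewrite -addn1 natrD; apply: ge_add => //; apply: ge_1.
Qed.

Lemma ge_int (m : int) : ge m%:~R 0.
Proof.
case: m => n; first by rewrite -pmulrn; apply: ge_nat.
by rewrite NegzE mulrNz; apply: ge_opp; rewrite -pmulrn; apply: ge_nat.
Qed.

Lemma gt_add x y s : gt x s -> gt y s -> gt (x + y) s.
Proof. by move=> hx hy; apply: lt_le_trans (vD x y); rewrite lt_min; apply/andP. Qed.
Lemma gt_ge x s s' : (s < s')%R -> ge x s' -> gt x s.
Proof. by move=> h; apply: lt_le_trans; rewrite lte_fin. Qed.
Lemma gt_mul0l x y s : ge x 0 -> gt y s -> gt (x * y) s.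
Proof.
move=> hx hy; rewrite /gt vM -[s%:E]add0e.
by apply: lee_ltD.
Qed.
Lemma gt_sum (I : Type) (r : seq I) (P : pred I) (F : I -> K) s :
  (forall i, P i -> gt (F i) s) -> gt (\sum_(i <- r | P i) F i) s.
Proof. by move=> h; apply: (big_ind (fun x => gt x s)) => //; [rewrite /gt v0 ltey | move=> *; exact: gt_add]. Qed.

Lemma ge_all x : (forall s, ge x s) -> x = 0.
Proof.
move=> h; apply: v_inf; move: (h 0); rewrite /ge.
case E: (v x) => [r| |] //.
by move: (h (r + 1)); rewrite /ge E lee_fin => H _; exfalso; move: H; apply/negP; rewrite -ltNge; lra.
Qed.

Lemma vX x s n : v x = s%:E -> v (x ^+ n) = (n%:R * s)%:E.
Proof.
move=> h; elim: n => [|n IH]; first by rewrite expr0 v1 mul0r.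
by rewrite exprS vM IH h -EFinD -addn1 natrD mulrDl mul1r addrC.
Qed.

End Val.

Section Zp.
Variables (R : realType) (K : fieldType) (v : K -> \bar R) (p l : nat) (zeta : K).
Hypothesis Hv : is_valuation v.
Notation Zp := (is_Zp v p).
Notation Zpl := (is_Zpl v p l zeta).

Lemma zp_int (m : int) : Zp m%:~R.
Proof. by move=> n; exists m; rewrite subrr v0 // leey. Qed.
Lemma zp_nat (m : nat) : Zp m%:R.
Proof. by rewrite pmulrn; apply: zp_int. Qed.
Lemma zp_0 : Zp 0. Proof. exact: (zp_nat 0). Qed.
Lemma zp_1 : Zp 1. Proof. exact: (zp_nat 1). Qed.

Lemma zp_add x y : Zp x -> Zp y -> Zp (x + y).
Proof.
move=> hx hy n; have [m1 h1] := hx n; have [m2 h2] := hy n.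
exists (m1 + m2); rewrite intrD.
have -> : x + y - (m1%:~R + m2%:~R) = (x - m1%:~R) + (y - m2%:~R) by ring.
by apply: le_trans (vD Hv _ _); rewrite le_min h1 h2.
Qed.
Lemma zp_opp x : Zp x -> Zp (- x).
Proof.
move=> hx n; have [m1 h1] := hx n; exists (- m1).
by rewrite intrN -opprD vN.
Qed.

Lemma zp_ge0 x : Zp x -> ge v x 0.
Proof.
move=> hx; have [m h] := hx 0%N; rewrite expr0 v1 // in h.
have -> : x = (x - m%:~R) + m%:~R by ring.
by apply: ge_add => //; apply: ge_int.
Qed.

Lemma zp_mul x y : Zp x -> Zp y -> Zp (x * y).
Proof.
move=> hx hy n; have [m1 h1] := hx n; have [m2 h2] := hy n.
exists (m1 * m2); rewrite intrM.
have -> : x * y - m1%:~R * m2%:~R = x * (y - m2%:~R) + m2%:~R * (x - m1%:~R) by ring.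
apply: le_trans (vD Hv _ _); rewrite le_min; apply/andP; split; rewrite vM //.
  by rewrite -[v _ in X in (X <= _)%E]add0e; apply: leeD => //; apply: zp_ge0.
by rewrite -[v _ in X in (X <= _)%E]add0e; apply: leeD => //; apply: ge_int.
Qed.

Lemma zp_sum (I : Type) (r : seq I) (P : pred I) (F : I -> K) :
  (forall i, P i -> Zp (F i)) -> Zp (\sum_(i <- r | P i) F i).
Proof. by move=> h; apply: (big_ind Zp) => //; [apply: zp_0 | move=> *; exact: zp_add]. Qed.

Lemma zpl_0 : Zpl 0.
Proof. exists (fun=> 0); split=> [k|]; first exact: zp_0. by rewrite big1 // => k _; rewrite mul0r. Qed.

Lemma zpl_add x y : Zpl x -> Zpl y -> Zpl (x + y).
Proof.
move=> [a [ha ->]] [b [hb ->]]; exists (fun k => a k + b k); split.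
  by move=> k; apply: zp_add.
by rewrite -big_split /=; apply: eq_bigr => k _; rewrite mulrDl.
Qed.

Lemma zpl_scale b x : Zp b -> Zpl x -> Zpl (b * x).
Proof.
move=> hb [a [ha ->]]; exists (fun k => b * a k); split.
  by move=> k; apply: zp_mul.
by rewrite mulr_sumr; apply: eq_bigr => k _; rewrite mulrA.
Qed.

Lemma zpl_sum (I : Type) (r : seq I) (P : pred I) (F : I -> K) :
  (forall i, P i -> Zpl (F i)) -> Zpl (\sum_(i <- r | P i) F i).
Proof. by move=> h; apply: (big_ind Zpl) => //; [apply: zpl_0 | move=> *; exact: zpl_add]. Qed.

Lemma frob0E (x : 'I_l -> K) : frob_emb p zeta 0 x = \sum_(k < l) x k * zeta ^+ k.
Proof. by rewrite /frob_emb; apply: eq_bigr => k _; rewrite expn0 muln1. Qed.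

Lemma zpl_frob0 (x : 'I_l -> K) : (forall k, Zp (x k)) -> Zpl (frob_emb p zeta 0 x).
Proof. by move=> h; rewrite frob0E; exists x. Qed.

Lemma zpl_pow (n : 'I_l) : Zpl (zeta ^+ n).
Proof.
exists (fun k => (k == n)%:R); split; first by move=> k; apply: zp_nat.
rewrite (bigD1 n) //= eqxx mul1r big1 ?addr0 // => k /negbTE ->; by rewrite mul0r.
Qed.

Hypothesis zeta0 : ge v zeta 0.

Lemma zpl_ge0 x : Zpl x -> ge v x 0.
Proof.
move=> [a [ha ->]]; apply: ge_sum => // k _; apply: ge_mul0l => //.
  by apply: zp_ge0.
by apply: ge_pow.
Qed.

Lemma frob_ge0 i (x : 'I_l -> K) : (forall k, Zp (x k)) -> ge v (frob_emb p zeta i x) 0.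
Proof.
move=> h; apply: ge_sum => // k _; apply: ge_mul0l => //.
  by apply: zp_ge0.
by apply: ge_pow.
Qed.

End Zp.

Lemma zeta_ge0 (R : realType) (K : fieldType) (v : K -> \bar R) (N : nat) (zeta : K) :
  is_valuation v -> (0 < N)%N -> zeta ^+ N = 1 -> ge v zeta 0.
Proof.
move=> Hv N0 hz.
have z0 : zeta != 0.
  by apply/eqP => e; move: hz; rewrite e expr0n; case: N N0 => // N _ /= /eqP; rewrite eq_sym oner_eq0.
have [s hs] := vfin Hv z0.
have := vX Hv N hs; rewrite hz v1 // => -[] e.
have : s = 0.
  apply/eqP; move: e => /esym /eqP; rewrite mulf_eq0 pnatr_eq0.
  by case/orP => // /eqP N00; move: N0; rewrite N00.
by move=> s0; rewrite /ge hs s0.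
Qed.

Section Chi.
Variables (R : realType) (K : fieldType) (v : K -> \bar R) (p a l : nat) (zeta : K) (chi : K -> K).
Hypothesis Hv : is_valuation v.
Hypothesis pprime : prime p.
Hypothesis vpa : v ((p%:R : K) ^+ a) = 1%:E.
Hypothesis zeta0 : ge v zeta 0.
Hypothesis Hchi : good_character v p l zeta chi.
Notation Zp := (is_Zp v p).
Notation Zpl := (is_Zpl v p l zeta).

Lemma chiM x y : Zpl x -> Zpl y -> chi (x + y) = chi x * chi y.
Proof. by case: Hchi => H _ _ _ _; apply: H. Qed.

Lemma chi0 : chi 0 = 1.
Proof.
have z0 : Zpl 0 by apply: zpl_0.
have h := chiM z0 z0; rewrite addr0 in h.
have nz : chi 0 != 0 by case: Hchi => _ H _ _ _; apply: H; apply: zpl_0.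
by apply: (mulfI nz); rewrite -h mulr1.
Qed.

Lemma chi_nat n y : Zpl y -> chi (n%:R * y) = chi y ^+ n.
Proof.
move=> hy; elim: n => [|n IH]; first by rewrite mul0r chi0 expr0.
rewrite mulrS mulrDl mul1r chiM // ?IH ?exprS //.
by apply: zpl_scale => //; apply: zp_nat.
Qed.

Lemma step1 t r n : (0 <= r)%R -> ge v t r ->
  ge v ((1 + t) ^+ n - 1) r /\ ge v ((1 + t) ^+ n - 1 - n%:R * t) (r + r).
Proof.
move=> r0 ht.
have h1 : ge v (1 + t) 0 by apply: ge_add => //; [apply: ge_1 | apply: ge_le ht].
elim: n => [|n [IH1 IH2]]; first by rewrite expr0 subrr mul0r subr0; split; apply: ge_0.
split.
  have -> : (1 + t) ^+ n.+1 - 1 = ((1 + t) ^+ n - 1) * (1 + t) + t by rewrite exprSr; ring.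
  by apply: ge_add => //; apply: ge_mul0r.
have -> : (1 + t) ^+ n.+1 - 1 - n.+1%:R * t =
   ((1 + t) ^+ n - 1 - n%:R * t) + t * ((1 + t) ^+ n - 1) by rewrite exprS mulrS; ring.
by apply: ge_add => //; apply: ge_mul.
Qed.

Lemma step2 y b r : (0 <= r)%R -> Zpl y -> Zp b -> ge v (chi y - 1) r ->
  ge v (chi (b * y) - 1 - b * (chi y - 1)) (r + r).
Proof.
move=> r0 hy hb hf.
have [N HN] : exists N : R, forall y', Zpl y' -> (N%:E <= v (y' - 0))%E ->
    ((r + r)%:E <= v (chi y' - chi 0))%E.
  by case: Hchi => _ _ H _ _; apply: H; apply: zpl_0.
set x := `|N| + r + r.
have x0 : (0 <= x)%R by rewrite /x; apply: addr_ge0 => //; apply: addr_ge0.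
have hk := archi_boundP x0; set k := Num.Def.archi_bound x in hk.
have [m hm] := hb (a * k)%N.
have vpn : v ((p%:R : K) ^+ (a * k)) = (k%:R * 1)%:E by rewrite exprM (vX Hv k vpa).
rewrite vpn mulr1 in hm.
set d : int := (p ^ (a * k))%N.
have d0 : d != 0.
  have : (0 < p ^ (a * k))%N by rewrite expn_gt0 prime_gt0.
  by rewrite /d; case: (p ^ (a * k))%N.
have [n' en'] : exists n' : nat, (m %% d)%Z = n'%:Z.
  by exists `|(m %% d)%Z|%N; rewrite gez0_abs // modz_ge0.
have hdelta : ge v (b - n'%:R) k%:R.
  have -> : b - n'%:R = (b - m%:~R) + (m %/ d)%Z%:~R * (p%:R ^+ (a * k)).
    have e := divz_eq m d; rewrite en' in e.
    have -> : (p%:R : K) ^+ (a * k) = d%:~R by rewrite /d -natrX pmulrn.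
    rewrite -intrM.
    have -> : (n'%:R : K) = (n'%:Z)%:~R by rewrite pmulrn.
    have -> : ((m %/ d)%Z * d)%:~R = (m%:~R : K) - (n'%:Z)%:~R.
      by rewrite {2}e intrD addrK.
    ring.
  apply: ge_add => //.
  apply: ge_mul0l => //; first by apply: ge_int.
  by rewrite /ge vpn mulr1.
have hd : Zp (b - n'%:R) by apply: zp_add => //; apply: zp_opp => //; apply: zp_nat.
have hy' : Zpl ((b - n'%:R) * y) by apply: zpl_scale.
have hY : ge v (chi ((b - n'%:R) * y) - 1) (r + r).
  move: (HN _ hy'); rewrite chi0 subr0; apply.
  apply: (ge_le (s := k%:R)).
    apply: le_trans (ltW hk); rewrite /x.
    by move: (ler_norm N); lra.
  by rewrite -[k%:R]addr0; apply: ge_mul => //; exact: (zpl_ge0 Hv zeta0 hy).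
have eb : b * y = n'%:R * y + (b - n'%:R) * y by ring.
rewrite eb chiM //; last by apply: zpl_scale => //; apply: zp_nat.
rewrite chi_nat //.
set t := chi y - 1.
have ct : chi y = 1 + t by rewrite /t; ring.
rewrite ct; set Y := chi ((b - n'%:R) * y) in hY *.
have [_ hE] := step1 n' r0 hf.
have -> : (1 + t) ^+ n' * Y - 1 - b * t =
   ((1 + t) ^+ n' - 1 - n'%:R * t) + (1 + t) ^+ n' * (Y - 1) - (b - n'%:R) * t by ring.
have h1t : ge v (1 + t) 0 by apply: ge_add => //; [apply: ge_1 | apply: ge_le hf].
have hX : ge v ((1 + t) ^+ n') 0 by apply: ge_pow.
have hA : ge v ((1 + t) ^+ n' * (Y - 1)) (r + r) by apply: ge_mul0l.
have hB : ge v ((b - n'%:R) * t) (r + r).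
  apply: (ge_le (s := k%:R + r)); last by apply: ge_mul.
  rewrite lerD2r; apply: le_trans (ltW hk); rewrite /x.
  by move: (normr_ge0 N); lra.
by apply: ge_sub => //; apply: ge_add.
Qed.

Lemma linsum n (b y : 'I_n -> K) r : (0 <= r)%R ->
  (forall k, Zp (b k)) -> (forall k, Zpl (y k)) -> (forall k, ge v (chi (y k) - 1) r) ->
  ge v (chi (\sum_(k < n) b k * y k) - 1 - \sum_(k < n) b k * (chi (y k) - 1)) (r + r).
Proof.
move=> r0 hb hy hf.
suff : [/\ Zpl (\sum_(k < n) b k * y k),
  ge v (chi (\sum_(k < n) b k * y k) - 1 - \sum_(k < n) b k * (chi (y k) - 1)) (r + r) &
  ge v (\sum_(k < n) b k * (chi (y k) - 1)) r] by case.
apply: (big_ind2 (fun Y F => [/\ Zpl Y, ge v (chi Y - 1 - F) (r + r) & ge v F r])).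
- by split; [apply: zpl_0 | rewrite chi0 !subrr; apply: ge_0 | apply: ge_0].
- move=> Y1 F1 Y2 F2 [z1 e1 f1] [z2 e2 f2]; split.
  + exact: zpl_add.
  + rewrite chiM //.
    have -> : chi Y1 * chi Y2 - 1 - (F1 + F2) =
      (chi Y1 - 1 - F1) + (chi Y2 - 1 - F2) + (chi Y1 - 1) * (chi Y2 - 1) by ring.
    have g1 : ge v (chi Y1 - 1) r.
      have -> : chi Y1 - 1 = (chi Y1 - 1 - F1) + F1 by ring.
      by apply: ge_add => //; apply: ge_le e1; lra.
    have g2 : ge v (chi Y2 - 1) r.
      have -> : chi Y2 - 1 = (chi Y2 - 1 - F2) + F2 by ring.
      by apply: ge_add => //; apply: ge_le e2; lra.
    exact: (ge_add Hv (ge_add Hv e1 e2) (ge_mul Hv g1 g2)).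
  + exact: (ge_add Hv f1 f2).
- move=> k _; split.
  + by apply: zpl_scale.
  + exact: step2.
  + by apply: ge_mul0l => //; apply: zp_ge0.
Qed.

End Chi.

Lemma sum_shift (K : fieldType) (l : nat) (g : nat -> K) :
  g l = g 0%N -> \sum_(i < l) g i = \sum_(i < l) g i.+1.
Proof.
case: l => [|l] h; first by rewrite !big_ord0.
by rewrite big_ord_recl big_ord_recr /= h addrC.
Qed.

Section LA.
Variables (R : realType) (K : fieldType) (v : K -> \bar R) (p l : nat) (zeta : K).
Hypothesis Hv : is_valuation v.
Hypothesis hzeta : zeta ^+ (p ^ l).-1 = 1.
Hypothesis pprime : prime p.
Notation Zp := (is_Zp v p).
Notation Zpl := (is_Zpl v p l zeta).

Definition Fr : 'M[K]_l := \matrix_(n, i) zeta ^+ (n * p ^ i.+1).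
Definition mat (d : 'I_l -> 'I_l -> K) : 'M[K]_l := \matrix_(j, k) d j k.
Definition Qm d := mat d *m Fr.

Lemma QmE d j i : Qm d j i = frob_emb p zeta i.+1 (d j).
Proof. by rewrite /Qm mxE; apply: eq_bigr => n _; rewrite !mxE. Qed.

Lemma frob_l (x : 'I_l -> K) : frob_emb p zeta l x = frob_emb p zeta 0 x.
Proof.
apply: eq_bigr => n _; congr (_ * _).
have hp : (p ^ l = (p ^ l).-1 + 1)%N.
  by rewrite addn1 prednK // expn_gt0 prime_gt0.
have h1 : zeta ^+ (n * (p ^ l).-1) = 1 by rewrite mulnC exprM hzeta expr1n.
by rewrite expn0 muln1 hp mulnDr muln1 exprD h1 mul1r.
Qed.

Lemma dualQ d ds : is_dual_basis v p zeta d ds -> Qm ds *m (Qm d)^T = 1%:M.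
Proof.
move=> [_ hd]; apply/matrixP => a b; rewrite mxE [RHS]mxE -hd.
rewrite (@sum_shift _ _ (fun i => frob_emb p zeta i (ds a) * frob_emb p zeta i (d b))) /=.
  by apply: eq_bigr => i _; rewrite [(Qm d)^T _ _]mxE !QmE.
by rewrite !frob_l.
Qed.

Lemma basisB c : is_Zp_basis v p zeta c ->
  exists B : 'M[K]_l, (forall n j, Zp (B n j)) /\ B *m mat c = 1%:M.
Proof.
move=> [hc hb].
have : forall n : 'I_l, exists b : 'I_l -> K, (forall j, Zp (b j)) /\
    zeta ^+ n = \sum_(j < l) b j * frob_emb p zeta 0 (c j).
  move=> n; have hz : Zpl (zeta ^+ n) by apply: zpl_pow.
  have [b [hb1 _]] := hb _ hz; by exists b.
case/fin_all_exists => B hB.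
exists (\matrix_(n, j) B n j); split; first by move=> n j; rewrite mxE; case: (hB n).
apply: mulmx1C; apply/matrixP => j i.
have hz : Zpl (frob_emb p zeta 0 (c j)) by apply: zpl_frob0.
have [b0 [_ hu]] := hb _ hz.
have e1 : (fun i => (mat c *m \matrix_(n, j) B n j) j i) = b0.
  apply/esym; apply: hu; split.
    by move=> k; rewrite mxE; apply: zp_sum => // n _; apply: zp_mul => //; rewrite !mxE;
       [apply: hc | case: (hB n)].
  rewrite frob0E.
  under eq_bigr => n _ do rewrite (proj2 (hB n)) mulr_sumr.
  rewrite exchange_big /=; apply: eq_bigr => k _; rewrite mxE mulr_suml.
  by apply: eq_bigr => n _; rewrite !mxE mulrA.
have e2 : (fun i => (1%:M : 'M[K]_l) j i) = b0.
  apply/esym; apply: hu; split.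
    by move=> k; rewrite mxE; apply: zp_nat.
  rewrite (bigD1 j) //= big1 ?addr0; first by rewrite mxE eqxx mul1r.
  by move=> k /negbTE jk; rewrite mxE eq_sym jk mul0r.
have := congr1 (fun f => f i) (etrans e1 (esym e2)); by [].
Qed.

End LA.

Lemma prod_diff (R : realType) (K : fieldType) (v : K -> \bar R) (Hv : is_valuation v)
  n (F G : 'I_n -> K) r : (0 <= r)%R ->
  (forall i, ge v (F i) r) -> (forall i, ge v (G i) r) -> (forall i, ge v (F i - G i) (r + r)) ->
  ge v (\prod_(i < n) F i - \prod_(i < n) G i) (n%:R * r + r).
Proof.
move=> r0; elim: n F G => [|n IH] F G hF hG hFG.
  by rewrite !big_ord0 subrr; apply: ge_0.
rewrite !big_ord_recr /=.
set PF := \prod_(i < n) _; set PG := \prod_(i < n) _.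
have -> : PF * F ord_max - PG * G ord_max = (PF - PG) * F ord_max + PG * (F ord_max - G ord_max) by ring.
have -> : n.+1%:R * r + r = (n%:R * r + r) + r by rewrite -natr1; ring.
apply: ge_add => //.
  by apply: ge_mul => //; apply: IH.
have -> : n%:R * r + r + r = n%:R * r + (r + r) by ring.
apply: ge_mul => //; exact: ge_prod.
Qed.

Lemma nonarch (R : realType) (K : fieldType) (v : K -> \bar R) (Hv : is_valuation v)
  x y (s s' : R) : (s < s')%R -> ge v x s -> ge v y s -> ge v (x - y) s' ->
  (v x = s%:E <-> v y = s%:E).
Proof.
move=> ss hx hy hxy.
have hyx : ge v (y - x) s' by rewrite -opprB; apply: ge_opp.
have key : forall x y, ge v x s -> ge v y s -> ge v (x - y) s' -> v x = s%:E -> v y = s%:E.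
  move=> x1 y1 h1 h2 h3 e; case: (leP (v y1) s%:E) => h.
    by apply/le_anti/andP; split.
  have : gt v x1 s.
    have -> : x1 = y1 + (x1 - y1) by ring.
    by apply: gt_add => //; apply: gt_ge ss h3.
  by rewrite /gt e ltxx.
by split; apply: key.
Qed.

Section Main.
Variables (R : realType) (K : fieldType) (v : K -> \bar R) (p a l : nat) (zeta : K) (chi : K -> K).
Variables (c cs : 'I_l -> 'I_l -> K) (B : 'M[K]_l).
Hypothesis Hv : is_valuation v.
Hypothesis pprime : prime p.
Hypothesis vpa : v ((p%:R : K) ^+ a) = 1%:E.
Hypothesis hzeta : zeta ^+ (p ^ l).-1 = 1.
Hypothesis zeta0 : ge v zeta 0.
Hypothesis Hchi : good_character v p l zeta chi.
Hypothesis hbc : is_Zp_basis v p zeta c.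
Hypothesis hdc : is_dual_basis v p zeta c cs.
Hypothesis hB1 : forall n j, is_Zp v p (B n j).
Hypothesis hB2 : B *m mat c = 1%:M.
Notation Zp := (is_Zp v p).
Notation Zpl := (is_Zpl v p l zeta).

Definition u k := chi (frob_emb p zeta 0 (c k)) - 1.
Definition Xm := Qm p zeta cs.
Definition Lam (i : 'I_l) := \sum_(k < l) Xm k i * u k.
Definition Ld (d ds : 'I_l -> 'I_l -> K) (i : 'I_l) :=
  \sum_(j < l) frob_emb p zeta i.+1 (d j) * t_coord p zeta chi ds j.

Lemma hQX : Qm p zeta c *m Xm^T = 1%:M.
Proof.
have h := dualQ hzeta pprime hdc.
by rewrite -[Qm p zeta c]trmxK -trmx_mul h trmx1.
Qed.

Section Basis.
Variables (d ds : 'I_l -> 'I_l -> K).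
Hypothesis hbd : is_Zp_basis v p zeta d.
Hypothesis hdd : is_dual_basis v p zeta d ds.
Definition beta := mat ds *m B.

Lemma beta_zp j k : Zp (beta j k).
Proof.
case: hdd => hz _; rewrite mxE; apply: zp_sum => // n _; apply: zp_mul => //.
by rewrite mxE.
Qed.

Lemma hmat : mat ds = beta *m mat c.
Proof. by rewrite /beta -mulmxA hB2 mulmx1. Qed.

Lemma he j : frob_emb p zeta 0 (ds j) = \sum_(k < l) beta j k * frob_emb p zeta 0 (c k).
Proof.
rewrite frob0E.
have e n : ds j n = \sum_(k < l) beta j k * c k n.
  have := congr1 (fun M : 'M[K]_l => M j n) hmat; rewrite /= mxE => ->.
  by rewrite [LHS]mxE; apply: eq_bigr => k _; rewrite [mat c _ _]mxE.
under eq_bigr => n _ do rewrite e mulr_suml.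
rewrite exchange_big /=; apply: eq_bigr => k _; rewrite frob0E mulr_sumr.
by apply: eq_bigr => n _; rewrite mulrA.
Qed.

Lemma hG : (Qm p zeta d)^T *m beta = Xm^T.
Proof.
have h1 : Qm p zeta ds = beta *m Qm p zeta c by rewrite /Qm hmat mulmxA.
have h2 : (Qm p zeta d)^T *m Qm p zeta ds = 1%:M by apply: mulmx1C; exact: (dualQ hzeta pprime hdd).
by rewrite -[LHS]mulmx1 -hQX mulmxA -[_ *m beta *m _]mulmxA -h1 h2 mul1mx.
Qed.

Variable r : R.
Hypothesis r0 : (0 <= r)%R.
Hypothesis hu : forall k, ge v (u k) r.

Lemma ht_diff j : ge v (t_coord p zeta chi ds j - \sum_(k < l) beta j k * u k) (r + r).
Proof.
rewrite /t_coord he /u.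
apply: (linsum Hv pprime vpa zeta0 Hchi) => //.
- exact: beta_zp.
- by move=> k; apply: zpl_frob0 => //; case: hbc.
Qed.

Lemma ht j : ge v (t_coord p zeta chi ds j) r.
Proof.
have -> : t_coord p zeta chi ds j =
  (t_coord p zeta chi ds j - \sum_(k < l) beta j k * u k) + \sum_(k < l) beta j k * u k by ring.
apply: ge_add => //.
  by have := ht_diff j; apply: ge_le; rewrite lerDl.
apply: ge_sum => // k _; apply: ge_mul0l => //; apply: zp_ge0 => //; exact: beta_zp.
Qed.

Lemma hL (i : 'I_l) : ge v (Ld d ds i - Lam i) (r + r).
Proof.
have -> : Lam i = \sum_(j < l) frob_emb p zeta i.+1 (d j) * \sum_(k < l) beta j k * u k.
  rewrite /Lam.
  have e k : Xm k i = \sum_(j < l) frob_emb p zeta i.+1 (d j) * beta j k.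
    have := congr1 (fun M : 'M[K]_l => M i k) hG; rewrite /= [in RHS]mxE => <-.
    by rewrite mxE; apply: eq_bigr => j _; rewrite mxE QmE.
  under eq_bigr => k _ do rewrite e mulr_suml.
  rewrite exchange_big /=; apply: eq_bigr => j _; rewrite mulr_sumr.
  by apply: eq_bigr => k _; rewrite mulrA.
rewrite /Ld -sumrB; apply: ge_sum => // j _; rewrite -mulrBr; apply: ge_mul0l => //.
  by apply: frob_ge0 => //; case: hbd.
exact: ht_diff.
Qed.

Lemma hLr (i : 'I_l) : ge v (Ld d ds i) r.
Proof.
apply: ge_sum => // j _; apply: ge_mul0l => //; last exact: ht.
by apply: frob_ge0 => //; case: hbd.
Qed.

End Basis.


Variables (c' cs' : 'I_l -> 'I_l -> K).
Hypothesis hbc' : is_Zp_basis v p zeta c'.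
Hypothesis hdc' : is_dual_basis v p zeta c' cs'.
Hypothesis l0 : (0 < l)%N.

Lemma u_expand k0 : u k0 = \sum_(i < l) Qm p zeta c k0 i * Lam i.
Proof.
rewrite /Lam; under eq_bigr => i _ do rewrite mulr_sumr.
have e k : \sum_(i < l) Qm p zeta c k0 i * Xm k i = (k0 == k)%:R.
  have := congr1 (fun M : 'M[K]_l => M k0 k) hQX; rewrite /= [in RHS]mxE mxE => <-.
  by apply: eq_bigr => i _; rewrite [Xm^T _ _]mxE.
rewrite exchange_big /=.
under eq_bigr => k _ do (under eq_bigr => i _ do rewrite mulrA; rewrite -mulr_suml e).
rewrite (bigD1 k0) //= eqxx mul1r big1 ?addr0 // => k /negbTE; rewrite eq_sym => ->.
by rewrite mul0r.
Qed.

Lemma bigmin_r (d ds : 'I_l -> 'I_l -> K) r : is_Zp_basis v p zeta d -> is_dual_basis v p zeta d ds ->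
  (0 < r)%R -> (forall k, ge v (u k) r) -> (exists k0, v (u k0) = r%:E) ->
  \big[Order.min/+oo%E]_(j < l) v (t_coord p zeta chi ds j) = r%:E.
Proof.
move=> hbd hdd rp hu [k0 hk0].
have r0 : (0 <= r)%R by apply: ltW.
apply/le_anti/andP; split; last first.
  by apply: le_bigmin => [|j _]; [apply: leey | apply: (ht hdd r0 hu)].
case: (boolP [exists j, (v (t_coord p zeta chi ds j) <= r%:E)%E]).
  by case/existsP => j hj; apply: le_trans hj; apply: bigmin_le.
rewrite negb_exists => /forallP hall.
have hgt j : gt v (t_coord p zeta chi ds j) r by rewrite /gt ltNge; apply: hall.
have hLgt i : gt v (Ld d ds i) r.
  apply: gt_sum => // j _; apply: gt_mul0l => //.
  by apply: frob_ge0 => //; case: hbd.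
have : gt v (u k0) r.
  rewrite u_expand.
  have -> : \sum_(i < l) Qm p zeta c k0 i * Lam i =
    \sum_(i < l) Qm p zeta c k0 i * Ld d ds i + - \sum_(i < l) Qm p zeta c k0 i * (Ld d ds i - Lam i).
    by rewrite -sumrB; apply: eq_bigr => i _; ring.
  apply: gt_add => //.
    apply: gt_sum => // i _; apply: gt_mul0l => //.
    by rewrite QmE; apply: frob_ge0 => //; case: hbc.
  rewrite /gt vN //; apply: (gt_ge (s' := r + r)); first by rewrite ltrDl.
  apply: ge_sum => // i _; apply: ge_mul0l => //.
    by rewrite QmE; apply: frob_ge0 => //; case: hbc.
  exact: (hL hbd hdd r0 hu).
by rewrite /gt hk0 ltxx.
Qed.

Lemma adm_zero (d ds : 'I_l -> 'I_l -> K) : (forall j, t_coord p zeta chi ds j = 0) ->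
  adm_eq v p zeta d (t_coord p zeta chi ds).
Proof.
move=> h0; rewrite /adm_eq /frakS.
have i0 : 'I_l := Ordinal l0.
rewrite (bigD1 i0) //= big1; last by move=> j _; rewrite h0 mulr0.
rewrite mul0r v0 //.
rewrite (@bigmin_eq_id _ _ _ _ +oo%E) => [|j _]; last by rewrite h0 v0.
by rewrite mulry gtr0_sg ?mul1e // ltr0n.
Qed.

Lemma main_iff :
  adm_eq v p zeta c (t_coord p zeta chi cs) <-> adm_eq v p zeta c' (t_coord p zeta chi cs').
Proof.
set i0 : 'I_l := Ordinal l0.
set k0 := [arg min_(k < i0) v (u k)]%O.
have hmin : forall k, (v (u k0) <= v (u k))%E.
  by rewrite /k0; case: arg_minP => // k _ h j; apply: h.
have upos k : (0 < v (u k))%E.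
  case: Hchi => _ _ _ _ H; apply: H; apply: zpl_frob0 => //; by case: hbc.
case E: (v (u k0)) => [r | |].
- have rp : (0 < r)%R by have := upos k0; rewrite E lte_fin.
  have r0 : (0 <= r)%R by apply: ltW.
  have hu k : ge v (u k) r by rewrite /ge -E; apply: hmin.
  rewrite /adm_eq (bigmin_r hbc hdc rp hu) ?(bigmin_r hbc' hdc' rp hu); try by exists k0.
  rewrite -!EFinM.
  apply: (nonarch Hv (s' := l%:R * r + r)).
  - by rewrite ltrDl.
  - by have := ge_prod Hv (hLr hbc hdc r0 hu).
  - by have := ge_prod Hv (hLr hbc' hdc' r0 hu).
  - apply: (prod_diff Hv r0 (hLr hbc hdc r0 hu) (hLr hbc' hdc' r0 hu)) => i.
    have -> : Ld c cs i - Ld c' cs' i = (Ld c cs i - Lam i) - (Ld c' cs' i - Lam i) by ring.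
    by apply: ge_sub => //; apply: hL.
- have u0 k : u k = 0.
    by apply: (v_inf Hv); apply/eqP; rewrite eq_le leey /= -E hmin.
  have hu s k : ge v (u k) s by rewrite u0; apply: ge_0.
  have tz (d ds : 'I_l -> 'I_l -> K) : is_dual_basis v p zeta d ds -> forall j, t_coord p zeta chi ds j = 0.
    move=> hdd j; apply: (ge_all Hv) => s.
    apply: (ge_le (s := `|s|)); first by apply: ler_norm.
    exact: (ht hdd (normr_ge0 s) (hu `|s|) j).
  by split=> _; apply: adm_zero; [exact: (tz _ _ hdc') | exact: (tz _ _ hdc)].
- by have := upos k0; rewrite E.
Qed.

End Main.

Unset Implicit Arguments.

Theorem mainTheorem6 (R : realType) (K : closedFieldType) (v : K -> \bar R)
  (p a l : nat) (zeta : K) (chi : K -> K)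
  (c cs c' cs' : 'I_l -> 'I_l -> K) :
  prime p -> (0 < l)%N -> (0 < a)%N -> (l %| a)%N ->
  is_valuation v -> val_complete v ->
  v ((p%:R : K) ^+ a) = 1%:E ->
  (p ^ l)%N.-1.-primitive_root zeta ->
  good_character v p l zeta chi ->
  is_Zp_basis v p zeta c -> is_dual_basis v p zeta c cs ->
  is_Zp_basis v p zeta c' -> is_dual_basis v p zeta c' cs' ->
  (adm_eq v p zeta c (t_coord p zeta chi cs) <->
   adm_eq v p zeta c' (t_coord p zeta chi cs')).
Proof.
move=> pp l0 a0 la Hv _ vpa prim Hchi hbc hdc hbc' hdc'.
have hzeta : zeta ^+ (p ^ l).-1 = 1 by apply: prim_expr_order.
have N0 : (0 < (p ^ l).-1)%N.
  have : (p ^ 1 <= p ^ l)%N by rewrite leq_pexp2l // prime_gt0.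
  by rewrite expn1 => h; move: (prime_gt1 pp) => h1; rewrite -subn1 subn_gt0; apply: leq_trans h1 h.
have zeta0 : ge v zeta 0 by apply: (zeta_ge0 Hv N0).
have [B [hB1 hB2]] := basisB Hv hbc.
exact: (main_iff Hv pp vpa hzeta zeta0 Hchi hbc hdc hB1 hB2 hbc' hdc' l0).
Qed.
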